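(* Let $\boldsymbol k$ be an algebraically closed field with $\operatorname{char}\boldsymbol k\neq 2$, let $V$ be a vector space over $\boldsymbol k$ of finite dimension $n$, let $\mathcal C\subseteq V^*\otimes V^*\otimes V$ be the subspace of tensors fixed by the involution $\ell\otimes\ell'\otimes v\mapsto\ell'\otimes\ell\otimes v$, and let $G:=\mathrm{GL}(V)$ act on the projectivization $P\mathcal C$ of $\mathcal C$ via its natural linear action on $\mathcal C$. Then there is a dense open subset of $P\mathcal C$ such that for every point in it, its stabilizer in $G$ coincides with the center of $G$. *)

(* Defs.v *)
From HB Require Import structures.
From mathcomp Require Import all_boot all_order all_algebra.
From mathcomp Require Import mpoly.
Set Implicit Arguments. Unset Strict Implicit. Unset Printing Implicit Defensive.
Import Order.TTheory GRing.Theory Num.Theory.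
Local Open Scope ring_scope.

(* V = k^n with standard basis e_0..e_{n-1}.  An element of V^* (x) V^* (x) V
   is given by its coordinate array t i j l (coefficient of e_i^* (x) e_j^* (x) e_l). *)
Definition tensor (k : Type) (n : nat) := 'I_n -> 'I_n -> 'I_n -> k.

Definition in_C (k : Type) (n : nat) (t : tensor k n) : Prop :=
  forall i j l, t i j l = t j i l.

Definition ncoord (n : nat) : nat := #|{: 'I_n * 'I_n * 'I_n}|.

Definition coords (k : Type) (n : nat) (t : tensor k n) : 'I_(ncoord n) -> k :=
  fun q => let: (i, j, l) := enum_val q in t i j l.

(* points of the projectivization PC are represented by nonzero tensors of C
   (two representatives giving the same point iff they are proportional) *)
Definition PC_rep (k : ringType) (n : nat) (t : tensor k n) : Prop :=
  in_C t /\ exists i j l, t i j l != 0.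

(* Zariski-open subsets of PC: complements of common zero loci of a set of
   homogeneous polynomials in the coordinates. A subset of PC is represented
   by a predicate U on representatives. *)
Definition zariski_open (k : fieldType) (n : nat) (U : tensor k n -> Prop) : Prop :=
  exists S : {mpoly k[ncoord n]} -> Prop,
    (forall p, S p -> exists d, p \is d.-homog) /\
    (forall t, PC_rep t -> (U t <-> exists p, S p /\ p.@[coords t] != 0)).

Definition zariski_dense (k : fieldType) (n : nat) (U : tensor k n -> Prop) : Prop :=
  forall W : tensor k n -> Prop, zariski_open W ->
    (exists t, PC_rep t /\ W t) -> exists t, PC_rep t /\ W t /\ U t.

(* natural action of g in GL(V) on V^* (x) V^* (x) V:
   (g.t)(x, y) = g t(g^-1 x, g^-1 y) *)
Definition act (k : fieldType) (n : nat) (g : 'M[k]_n) (t : tensor k n) : tensor k n :=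
  fun i j l => \sum_(a < n) \sum_(b < n) \sum_(c < n)
     invmx g a i * invmx g b j * g l c * t a b c.

Definition stabilizes (k : fieldType) (n : nat) (g : 'M[k]_n) (t : tensor k n) : Prop :=
  exists lam : k, forall i j l, act g t i j l = lam * t i j l.

Definition central (k : fieldType) (n : nat) (g : 'M[k]_n) : Prop :=
  exists a : k, a != 0 /\ g = a%:M.

(* Main.v *)
Require Import Defs.
From HB Require Import structures.
From mathcomp Require Import all_boot all_order all_algebra.
From mathcomp Require Import mpoly.
From mathcomp Require Import perm.
From Stdlib Require Import FunctionalExtensionality.
From mathcomp Require Import ring.
Set Implicit Arguments. Unset Strict Implicit. Unset Printing Implicit Defensive.
Import Order.TTheory GRing.Theory Num.Theory.
Local Open Scope ring_scope.
Section Gen.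
Variable R : comNzRingType.
Variable n : nat.
Implicit Types (t : tensor R n) (x y : 'cV[R]_n).

Definition Lm t x : 'M[R]_n := \matrix_(l, j) \sum_i x i 0 * t i j l.
Definition tauv t : 'cV[R]_n := \col_i \sum_j t i j j.
Definition Bm t : 'M[R]_n := \matrix_(i, j) \sum_l tauv t l 0 * t i j l.
Definition uv t : 'cV[R]_n := \adj (Bm t) *m tauv t.
Definition wv t k : 'cV[R]_n := iter k (fun y => Lm t (uv t) *m y) (uv t).
Definition Wm t : 'M[R]_n := \matrix_(l, k) wv t k l 0.
Definition Q t : R := \det (Bm t) * \det (Wm t).
Definition dot x y : R := \sum_i x i 0 * y i 0.

Lemma mE t x y l : (Lm t x *m y) l 0 = \sum_i \sum_j x i 0 * y j 0 * t i j l.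
Proof.
rewrite mxE; under eq_bigr do rewrite mxE mulr_suml /=.
rewrite exchange_big; apply: eq_bigr => i _; apply: eq_bigr => j _.
by rewrite mulrAC.
Qed.

Lemma LmZ t c x : Lm t (c *: x) = c *: Lm t x.
Proof.
apply/matrixP => l j; rewrite !mxE mulr_sumr; apply: eq_bigr => i _.
rewrite mxE; ring.
Qed.

Lemma LmD t x y : Lm t (x + y) = Lm t x + Lm t y.
Proof.
apply/matrixP => l j; rewrite !mxE -big_split; apply: eq_bigr => i _.
by rewrite mxE /= mulrDl.
Qed.

Lemma trLm t x : \tr (Lm t x) = dot (tauv t) x.
Proof.
rewrite /mxtrace /dot; under eq_bigr do rewrite mxE.
rewrite exchange_big; apply: eq_bigr => i _; rewrite mxE mulr_suml /=.
by apply: eq_bigr => j _; rewrite mulrC.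
Qed.

Lemma dotC x y : dot x y = dot y x.
Proof. by apply: eq_bigr => i _; rewrite mulrC. Qed.

Lemma dotE x y : dot x y = (x^T *m y) 0 0.
Proof. by rewrite mxE; apply: eq_bigr => i _; rewrite mxE. Qed.

Lemma dot_mulmx x (A : 'M[R]_n) y : dot x (A *m y) = dot (A^T *m x) y.
Proof. by rewrite !dotE trmx_mul trmxK mulmxA. Qed.

Lemma BmE t x y : dot x (Bm t *m y) = dot (tauv t) (Lm t x *m y).
Proof.
rewrite /dot; under eq_bigr do rewrite mxE mulr_sumr /=.
under [RHS]eq_bigr => l _ do rewrite mE mulr_sumr.
rewrite [RHS]exchange_big; apply: eq_bigr => i _ /=.
under [RHS]eq_bigr => l _ do rewrite mulr_sumr.
rewrite [RHS]exchange_big; apply: eq_bigr => j _ /=.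
rewrite mxE mulr_suml mulr_sumr; apply: eq_bigr => l _.
rewrite mxE; ring.
Qed.

End Gen.

Section Fld.
Variable F : fieldType.
Variable n : nat.
Implicit Types (t : tensor F n) (x y z : 'cV[F]_n) (A B : 'M[F]_n).

Lemma mx_ext (A B : 'M[F]_n) : (forall y : 'cV[F]_n, A *m y = B *m y) -> A = B.
Proof.
move=> H; apply/matrixP => i j.
have := congr1 (fun M : 'cV[F]_n => M i 0) (H (delta_mx j 0)).
by rewrite -!colE !mxE.
Qed.

Lemma cv_ext (u v : 'cV[F]_n) : (forall i, u i 0 = v i 0) -> u = v.
Proof. by move=> H; apply/matrixP => i j; rewrite (ord1 j). Qed.

Lemma dot_delta i (v : 'cV[F]_n) : dot (delta_mx i 0) v = v i 0.
Proof.
rewrite /dot (bigD1 i) //= mxE !eqxx mul1r big1 ?addr0 // => j /negbTE ji.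
by rewrite mxE ji mul0r.
Qed.

Lemma dotZr x c (v : 'cV[F]_n) : dot x (c *: v) = c * dot x v.
Proof. by rewrite /dot mulr_sumr; apply: eq_bigr => i _; rewrite mxE; ring. Qed.

Section Aut.
Variable t : tensor F n.
Variable psi : 'M[F]_n.
Hypothesis psiU : psi \in unitmx.
Hypothesis hpsi : forall x y, psi *m (Lm t x *m y) = Lm t (psi *m x) *m (psi *m y).

Lemma Lm_conj x : Lm t (psi *m x) = psi *m Lm t x *m invmx psi.
Proof.
apply: (canRL (mulmxK psiU)); apply: mx_ext => y.
by rewrite -!mulmxA hpsi.
Qed.

Lemma tau_inv x : dot (tauv t) (psi *m x) = dot (tauv t) x.
Proof.
by rewrite -!trLm Lm_conj mxtrace_mulC mulmxA mulVmx // mul1mx.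
Qed.

Lemma B_inv x y : dot (psi *m x) (Bm t *m (psi *m y)) = dot x (Bm t *m y).
Proof. by rewrite !BmE -hpsi tau_inv. Qed.

Hypothesis BU : Bm t \in unitmx.

Lemma u_fix : psi *m uv t = uv t.
Proof.
have H : forall x, dot x (Bm t *m uv t) = \det (Bm t) * dot (tauv t) x.
  by move=> x; rewrite /uv mulmxA mul_mx_adj mul_scalar_mx dotZr dotC.
have E : Bm t *m (psi *m uv t) = Bm t *m uv t.
  apply: cv_ext => i; rewrite -!dot_delta.
  have -> : delta_mx i 0 = psi *m (invmx psi *m delta_mx i 0) :> 'cV_n.
    by rewrite mulmxA mulmxV // mul1mx.
  by rewrite B_inv !H tau_inv.
by rewrite -(mulKmx BU (psi *m uv t)) E mulKmx.
Qed.

Lemma w_fix k : psi *m wv t k = wv t k.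
Proof.
elim: k => [|k IH]; first exact: u_fix.
by rewrite /wv iterS -/(wv t k) hpsi u_fix IH.
Qed.

Hypothesis WU : Wm t \in unitmx.

Lemma psi1 : psi = 1%:M.
Proof.
have E : psi *m Wm t = Wm t.
  apply/matrixP => l k; rewrite !mxE.
  have := congr1 (fun M : 'cV[F]_n => M l 0) (w_fix k); rewrite mxE => <-.
  by apply: eq_bigr => j _; rewrite mxE.
by rewrite -(mulmxK WU psi) E mulmxV.
Qed.

End Aut.
End Fld.

Section Act.
Variable F : fieldType.
Variable n : nat.
Implicit Types (t : tensor F n) (x y z : 'cV[F]_n) (A B : 'M[F]_n).

Lemma bilE (u v : 'cV[F]_n) (M : 'M[F]_n) :
  \sum_i \sum_j u i 0 * v j 0 * M i j = (u^T *m M *m v) 0 0.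
Proof.
rewrite mxE exchange_big; apply: eq_bigr => j _ /=.
rewrite mxE mulr_suml; apply: eq_bigr => i _; rewrite mxE; ring.
Qed.

Definition Kmx (g : 'M[F]_n) t l : 'M[F]_n :=
  \matrix_(a, b) \sum_c g l c * t a b c.

Lemma actE g t i j l :
  act g t i j l = ((invmx g)^T *m Kmx g t l *m invmx g) i j.
Proof.
rewrite mxE /act; under [RHS]eq_bigr do rewrite mxE mulr_suml.
rewrite [RHS]exchange_big; apply: eq_bigr => a _ /=; apply: eq_bigr => b _.
rewrite !mxE mulr_sumr mulr_suml; apply: eq_bigr => c _; ring.
Qed.

Lemma act_bil g t x y l : g \in unitmx ->
  \sum_i \sum_j (g *m x) i 0 * (g *m y) j 0 * act g t i j l
  = (g *m (Lm t x *m y)) l 0.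
Proof.
move=> gU.
under eq_bigr do under eq_bigr do rewrite actE.
rewrite bilE.
have -> : (g *m x)^T *m ((invmx g)^T *m Kmx g t l *m invmx g) *m (g *m y)
   = (invmx g *m (g *m x))^T *m Kmx g t l *m (invmx g *m (g *m y)).
  by rewrite !trmx_mul !mulmxA.
rewrite !(mulKmx gU) -bilE mxE.
under [RHS]eq_bigr do rewrite mE mulr_sumr.
rewrite [RHS]exchange_big; apply: eq_bigr => a _ /=.
under [RHS]eq_bigr do rewrite mulr_sumr.
rewrite [RHS]exchange_big; apply: eq_bigr => b _ /=.
rewrite mxE mulr_sumr; apply: eq_bigr => c _; ring.
Qed.

End Act.

Section Main.
Variable F : fieldType.
Variable n : nat.
Implicit Types (t : tensor F n) (x y z : 'cV[F]_n) (A B : 'M[F]_n).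

Lemma Lm_delta t i j l :
  (Lm t (delta_mx i 0 : 'cV[F]_n) *m (delta_mx j 0 : 'cV[F]_n)) l 0 = t i j l.
Proof.
rewrite -colE !mxE (bigD1 i) //= mxE !eqxx mul1r big1 ?addr0 // => a /negbTE ai.
by rewrite mxE ai mul0r.
Qed.

Lemma stab_central t g : (exists i j l, t i j l != 0) -> Q t != 0 ->
  g \in unitmx -> stabilizes g t -> central g.
Proof.
move=> [i0 [j0 [l0 nz]]] Q0 gU [lam Hlam].
have HA : forall x y, g *m (Lm t x *m y) = lam *: (Lm t (g *m x) *m (g *m y)).
  move=> x y; apply: cv_ext => l; rewrite -act_bil // mxE mE mulr_sumr.
  apply: eq_bigr => i _; rewrite mulr_sumr; apply: eq_bigr => j _.
  by rewrite Hlam; ring.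
have lam0 : lam != 0.
  apply/negP => /eqP L0; move: nz; rewrite -Lm_delta.
  have := HA (delta_mx i0 0) (delta_mx j0 0); rewrite L0 scale0r => E.
  by rewrite -(mulKmx gU (_ *m _)) E mulmx0 mxE eqxx.
pose psi := lam *: g.
have psiU : psi \in unitmx by rewrite unitmxZ // unitfE.
have hpsi : forall x y, psi *m (Lm t x *m y) = Lm t (psi *m x) *m (psi *m y).
  move=> x y; rewrite /psi -!scalemxAl HA LmZ -scalemxAl -scalemxAr.
  by rewrite scalerA.
move: Q0; rewrite /Q mulf_eq0 negb_or => /andP [dB dW].
have BU : Bm t \in unitmx by rewrite unitmxE unitfE.
have WU : Wm t \in unitmx by rewrite unitmxE unitfE.
have P1 := psi1 psiU hpsi BU WU.
exists lam^-1; split; first by rewrite invr_eq0.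
by rewrite -[g]scale1r -(mulVf lam0) -scalerA -/psi P1 scalemx1.
Qed.

Lemma central_stab t g : central g -> stabilizes g t.
Proof.
move=> [a [a0 ->]]; exists a^-1 => i j l.
rewrite actE invmx_scalar tr_scalar_mx mul_scalar_mx -scalemxAl mul_mx_scalar.
rewrite scalerA !mxE (bigD1 l) //= mxE eqxx mulr1n big1 ?addr0.
  by rewrite mulrA -[a^-1 / a * a]mulrA mulVf // mulr1.
by move=> c /negbTE cl; rewrite mxE eq_sym cl mulr0n mul0r.
Qed.

End Main.

Section Witness.
Variable F : fieldType.
Variable n : nat.

Definition t1 : tensor F n := fun i j l =>
  if (i == 0 :> nat) then ((l == j.+1 :> nat)%:R + ((j == 0 :> nat) && (l == 0 :> nat))%:R)
  else if (j == 0 :> nat) then (l == i.+1 :> nat)%:R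
  else ((i == j) && (l == 0 :> nat))%:R.

Lemma t1_C : in_C t1.
Proof.
move=> [[|i] hi] [[|j] hj] l; rewrite /t1 /=.
- by [].
- by rewrite addr0.
- by rewrite addr0.
- by rewrite eq_sym.
Qed.

Lemma sum_pick (f : 'I_n -> F) k (hk : (k < n)%N) :
  \sum_(j < n) ((j : nat) == k)%:R * f j = f (Ordinal hk).
Proof.
rewrite (bigD1 (Ordinal hk)) //= eqxx mul1r big1 ?addr0 // => j nj.
suff /negbTE -> : (j : nat) != k by rewrite mul0r.
by apply: contra nj => /eqP jk; apply/eqP/val_inj.
Qed.

Hypothesis n0 : (0 < n)%N.

Lemma tau_t1 : tauv t1 = \col_i ((i : nat) == 0)%:R.
Proof.
apply/matrixP => i z; rewrite !mxE /t1; case: i => [[|i] hi] /=.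
  rewrite (_ : \sum_(j < n) _ = \sum_(j < n) ((j : nat) == 0)%:R * (1:F)).
    by rewrite (sum_pick (fun _ => 1) n0).
  apply: eq_bigr => j _.
  case: j => [[|j] hj] /=; rewrite ?mulr1 ?add0r ?addr0 //.
  by rewrite ltn_eqF.
rewrite big1 // => j _; case: j => [[|j] hj] //=; by rewrite andbF mulr0n.
Qed.

Lemma B_t1 : Bm t1 = 1%:M.
Proof.
apply/matrixP => i j; rewrite !mxE.
under eq_bigr do rewrite tau_t1 mxE.
rewrite (sum_pick (fun l => t1 i j l) n0) /t1 /=.
case: i => [[|i] hi]; case: j => [[|j] hj] /=.
all: by rewrite ?add0r ?addr0 ?andbT.
Qed.

Lemma u_t1 : uv t1 = \col_i ((i : nat) == 0)%:R.
Proof. by rewrite /uv B_t1 adj1 mul1mx tau_t1. Qed.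

Lemma w_t1 k l : wv t1 k l 0 = ((l : nat) <= k)%:R.
Proof.
elim: k l => [|k IH] l.
  by rewrite /wv /= u_t1 mxE leqn0.
rewrite /wv iterS -/(wv t1 k) mE.
have -> : \sum_(i < n) \sum_(j < n) uv t1 i 0 * wv t1 k j 0 * t1 i j l
    = \sum_(i < n) ((i : nat) == 0)%:R * \sum_(j < n) wv t1 k j 0 * t1 i j l.
  apply: eq_bigr => i _; rewrite mulr_sumr; apply: eq_bigr => j _.
  by rewrite u_t1 mxE mulrA.
rewrite (sum_pick (fun i => \sum_(j < n) wv t1 k j 0 * t1 i j l) n0) /t1 /=.
case: l => [[|l'] hl] /=.
  have -> : \sum_(j < n) wv t1 k j 0 * ((0 == j.+1)%:R + (((j:nat) == 0) && true)%:R)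
      = \sum_(j < n) ((j : nat) == 0)%:R * ((j : nat) <= k)%:R.
    by apply: eq_bigr => j _; rewrite IH andbT add0r mulrC.
  by rewrite (sum_pick (fun j : 'I_n => ((j : nat) <= k)%:R) n0).
have hl' : (l' < n)%N by apply: ltnW.
have -> : \sum_(j < n) wv t1 k j 0 * ((l'.+1 == j.+1)%:R + (((j:nat) == 0) && (l'.+1 == 0))%:R)
    = \sum_(j < n) ((j : nat) == l')%:R * ((j : nat) <= k)%:R.
  by apply: eq_bigr => j _; rewrite IH andbF addr0 eqSS eq_sym mulrC.
by rewrite (sum_pick (fun j : 'I_n => ((j : nat) <= k)%:R) hl').
Qed.

Lemma W_t1 : \det (Wm t1) = 1.
Proof.
rewrite -det_tr det_trig.
  by apply: big1 => i _; rewrite !mxE w_t1 leqnn.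
apply/is_trig_mxP => i j ij; rewrite !mxE w_t1.
by rewrite leqNgt ij.
Qed.

Lemma Q_t1 : Q t1 = 1.
Proof. by rewrite /Q B_t1 det1 W_t1 mulr1. Qed.

End Witness.

Section Map.
Variables (R S : comNzRingType) (f : {rmorphism R -> S}) (n : nat).
Definition mapT (t : tensor R n) : tensor S n := fun i j l => f (t i j l).
Variable t : tensor R n.

Lemma Lm_map x : Lm (mapT t) (map_mx f x) = map_mx f (Lm t x).
Proof.
apply/matrixP => l j; rewrite !mxE rmorph_sum; apply: eq_bigr => i _.
by rewrite rmorphM mxE.
Qed.

Lemma tau_map : tauv (mapT t) = map_mx f (tauv t).
Proof. by apply/matrixP => i z; rewrite !mxE rmorph_sum. Qed.

Lemma Bm_map : Bm (mapT t) = map_mx f (Bm t).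
Proof.
apply/matrixP => i j; rewrite !mxE rmorph_sum; apply: eq_bigr => l _.
by rewrite tau_map rmorphM mxE.
Qed.

Lemma uv_map : uv (mapT t) = map_mx f (uv t).
Proof. by rewrite /uv map_mxM Bm_map tau_map map_mx_adj. Qed.

Lemma wv_map m : wv (mapT t) m = map_mx f (wv t m).
Proof.
elim: m => [|m IH]; first exact: uv_map.
by rewrite /wv !iterS -!/(wv _ m) IH uv_map map_mxM Lm_map.
Qed.

Lemma Wm_map : Wm (mapT t) = map_mx f (Wm t).
Proof. by apply/matrixP => l m; rewrite !mxE wv_map mxE. Qed.

Lemma Q_map : Q (mapT t) = f (Q t).
Proof. by rewrite /Q rmorphM Bm_map Wm_map !det_map_mx. Qed.

End Map.

Section Poly.
Variable k : fieldType.
Variable n : nat.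
Local Notation N := (ncoord n).
Local Notation MP := {mpoly k[N]}.

Definition idx (i j l : 'I_n) : 'I_N := enum_rank (i, j, l).

Lemma coords_idx (t : tensor k n) i j l : coords t (idx i j l) = t i j l.
Proof. by rewrite /coords /idx enum_rankK. Qed.

Definition Tg : tensor MP n := fun i j l => 'X_(idx i j l).

Lemma Tg_hom i j l : Tg i j l \is 1.-homog.
Proof. by rewrite /Tg dhomogX; apply/eqP; apply: mdeg1. Qed.


Definition Qgen : MP := Q Tg.

Lemma Qgen_eval (t : tensor k n) : Qgen.@[coords t] = Q t.
Proof.
rewrite /Qgen -Q_map; congr Q.
apply: functional_extensionality => i; apply: functional_extensionality => j.
apply: functional_extensionality => l.
by rewrite /mapT /Tg /= mevalXU coords_idx.
Qed.

Lemma sign_hom d (b : bool) (p : MP) : p \is d.-homog -> (-1) ^+ b * p \is d.-homog.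
Proof. by case: b => hp; rewrite ?expr0 ?mul1r ?expr1 ?mulN1r ?rpredN. Qed.

Lemma prod_hom (I : finType) (P : pred I) (F : I -> MP) (e : I -> nat) :
  (forall i, P i -> F i \is (e i).-homog) ->
  \prod_(i | P i) F i \is (\sum_(i | P i) e i)%N.-homog.
Proof.
move=> H; apply: (big_ind2 (fun (p : MP) (d : nat) => p \is d.-homog)) => //.
- exact: dhomog1.
- by move=> x1 x2 y1 y2 h1 h2; apply: dhomogM.
Qed.

Lemma det_hom m (M : 'M[MP]_m) (d : 'I_m -> nat) :
  (forall i j, M i j \is (d j).-homog) -> \det M \is (\sum_j d j)%N.-homog.
Proof.
move=> H; rewrite /determinant; apply: rpred_sum => s _; apply: sign_hom.
rewrite [X in X.-homog](reindex_inj (@perm_inj _ s)) /=.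
by apply: prod_hom => i _; apply: H.
Qed.


Lemma tau_hom i : tauv Tg i 0 \is 1.-homog.
Proof. by rewrite mxE; apply: rpred_sum => j _; apply: Tg_hom. Qed.

Lemma Bm_hom i j : Bm Tg i j \is 2.-homog.
Proof.
rewrite mxE; apply: rpred_sum => l _.
exact: (dhomogM (tau_hom l) (Tg_hom i j l)).
Qed.

Definition adeg := (\sum_(j < n.-1) 2)%N.

Lemma adj_hom i j : \adj (Bm Tg) i j \is adeg.-homog.
Proof.
have HB := Bm_hom; move: HB; set B := Bm Tg; clearbody B => HB.
rewrite mxE /cofactor -signr_odd; apply: sign_hom.
by apply: det_hom => r c; rewrite !mxE; apply: HB.
Qed.

Lemma u_hom i : uv Tg i 0 \is (adeg + 1)%N.-homog.
Proof.
rewrite mxE; apply: rpred_sum => j _.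
exact: (dhomogM (adj_hom i j) (tau_hom j)).
Qed.

Definition dw m := iter m (fun d => ((adeg + 1 + 1) + d)%N) (adeg + 1)%N.

Lemma w_hom m i : wv Tg m i 0 \is (dw m).-homog.
Proof.
elim: m i => [|m IH] i; first exact: u_hom.
rewrite /wv iterS -/(wv Tg m) mxE; apply: rpred_sum => j _.
apply: dhomogM (IH j).
rewrite mxE; apply: rpred_sum => i' _.
exact: (dhomogM (u_hom i') (Tg_hom i' j i)).
Qed.

Lemma Qgen_hom : exists d, Qgen \is d.-homog.
Proof.
eexists; apply: dhomogM.
  by apply: (@det_hom _ _ (fun _ => 2%N)) => i j; apply: Bm_hom.
by apply: (@det_hom _ _ (fun m => dw m)) => i j; rewrite mxE; apply: w_hom.
Qed.

End Poly.

Section Dense.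
Variable k : closedFieldType.
Variable n : nat.
Local Notation N := (ncoord n).

Lemma line_poly (P : {mpoly k[N]}) (a b : 'I_N -> k) :
  exists G : {poly k}, forall s, G.[s] = P.@[fun q => a q * (1 - s) + b q * s].
Proof.
exists (\sum_(m <- msupp P) (P@_m)%:P *
          \prod_i ((a i)%:P * (1 - 'X) + (b i)%:P * 'X) ^+ m i) => s.
rewrite mevalE -horner_evalE rmorph_sum; apply: eq_bigr => m _.
rewrite rmorphM rmorph_prod /= horner_evalE hornerC; congr (_ * _).
apply: eq_bigr => i _; rewrite rmorphXn /= horner_evalE; congr (_ ^+ _).
by rewrite !hornerE.
Qed.

Lemma nonroot (G : {poly k}) : G != 0 -> exists s, G.[s] != 0.
Proof.
move=> G0.
have hs : size (G * 'X - 1) != 1%N.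
  rewrite size_polyDl size_mulX // ?size_polyN ?size_poly1.
    by rewrite eqSS size_poly_eq0.
  by rewrite ltnS lt0n size_poly_eq0.
have [s rs] := closed_rootP _ hs; exists s.
move: rs; rewrite /root !hornerE; apply: contraL => /eqP ->.
by rewrite mul0r sub0r oppr_eq0 oner_eq0.
Qed.

Lemma coords_line (t0 t2 : tensor k n) s q :
  coords (fun i j l => t0 i j l * (1 - s) + t2 i j l * s) q
  = coords t0 q * (1 - s) + coords t2 q * s.
Proof. by rewrite /coords; case: (enum_val q) => [[i j] l]. Qed.

Lemma dense_U : zariski_dense (fun t : tensor k n => Q t != 0).
Proof.
move=> W [S [_ HS]] [t0 [P0 W0]].
have [p [Sp p0]] := (HS t0 P0).1 W0.
case: P0 => C0 [i0 [j0 [l0 nz0]]].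
have n0 : (0 < n)%N by apply: leq_ltn_trans (leq0n _) (ltn_ord i0).
pose t2 := @t1 k n.
pose a := coords t0; pose b := coords t2.
have [Gp Hp] := line_poly p a b.
have [GQ HQ] := line_poly (@Qgen k n) a b.
have [Gc Hc] := line_poly 'X_(idx i0 j0 l0) a b.
have ev0 : forall s (P : {mpoly k[N]}), s = 0 ->
    P.@[fun q => a q * (1 - s) + b q * s] = P.@[a].
  by move=> s P ->; apply: meval_eq => q; rewrite subr0 mulr1 mulr0 addr0.
have ev1 : forall s (P : {mpoly k[N]}), s = 1 ->
    P.@[fun q => a q * (1 - s) + b q * s] = P.@[b].
  by move=> s P ->; apply: meval_eq => q; rewrite subrr mulr0 mulr1 add0r.
have nzP : forall (G : {poly k}) x, G.[x] != 0 -> G != 0.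
  by move=> G x; apply: contra => /eqP ->; rewrite horner0.
have Gp0 : Gp != 0 by apply: (nzP _ 0); rewrite Hp ev0.
have GQ0 : GQ != 0.
  by apply: (nzP _ 1); rewrite HQ ev1 // Qgen_eval Q_t1 // oner_eq0.
have Gc0 : Gc != 0.
  by apply: (nzP _ 0); rewrite Hc ev0 // mevalXU /a coords_idx.
have [s Hs] := nonroot (mulf_neq0 (mulf_neq0 Gp0 GQ0) Gc0).
move: Hs; rewrite !hornerM !mulf_eq0 !negb_or => /andP [/andP [Hps HQs] Hcs].
pose t := fun i j l => t0 i j l * (1 - s) + t2 i j l * s.
have ct : coords t =1 fun q => a q * (1 - s) + b q * s by move=> q; apply: coords_line.
have Pt : PC_rep t.
  split.
    move=> i j l; rewrite /t C0; congr (_ + _ * _); exact: t1_C.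
  exists i0, j0, l0; move: Hcs; rewrite Hc mevalXU /a /b -coords_line.
  by rewrite coords_idx.
exists t; split => //; split.
  apply/(HS t Pt).2; exists p; split => //.
  by rewrite (meval_eq _ ct) -Hp.
by rewrite -Qgen_eval (meval_eq _ ct) -HQ.
Qed.

End Dense.

Unset Implicit Arguments.
Set Strict Implicit.

Theorem theorem6 (k : closedFieldType) (n : nat) (hchar : 2%N \notin [pchar k]) :
  exists U : tensor k n -> Prop,
    zariski_open U /\ zariski_dense U /\
    forall t : tensor k n, PC_rep t -> U t ->
      forall g : 'M[k]_n, g \in unitmx -> (stabilizes g t <-> central g).
Proof.
exists (fun t => Q t != 0); split; [|split].
- exists (fun p => p = @Qgen k n); split.
    by move=> p ->; apply: Qgen_hom.
  move=> t _; split.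
    by move=> H; exists (@Qgen k n); rewrite Qgen_eval.
  by case=> p [-> H]; rewrite -Qgen_eval.
- exact: dense_U.
- move=> t [_ nz] Qt g gU; split.
    exact: stab_central.
  exact: central_stab.
Qed.
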